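(* Let $G$ be a graph and $r\ge4$. Let $\{A,B\}$ be an $r$-local $2$-separation of $G$ with separator $\{a',v\}$ such that $a'v$ is an edge of $G$, and let $\{A',B'\}$ be an $r$-local $2$-separation of $G$ with separator $\{a,v\}$ such that $av$ is an edge of $G$ and $a\ne a'$. Suppose that $a\in A$ and $a'\in A'$, and that $v$ is not an $r$-local cutvertex of $G$. Then $B\cap B'=\{v\}$.
   Context: Ball $B_r(v)$: the subgraph of all vertices and edges on closed walks of length $\le r$ through $v$; $v$ is an $r$-local cutvertex if $B_r(v)-v$ is disconnected. For $X=\{v_0,v_1\}$, $N(X)$ is the set of vertices outside $X$ adjacent to a vertex of $X$; the connectivity graph $C_r(v_0,v_1)$ has vertex set $N(X)$, with $a,b$ adjacent if for some $i\in\{0,1\}$ they lie in the same component of $B_r(v_i)-v_0-v_1$. $X$ is an $r$-local $2$-separator if $C_r(v_0,v_1)$ is disconnected and $d_G(v_0,v_1)\le r/2$. An $r$-local $2$-separation with separator $X$ is a pair $\{A,B\}$ with $A\cap B=X$ an $r$-local 2-separator such that $A\setminus X$ and $B\setminus X$ are nonempty and partition $N(X)$ so that the vertex set of each component of $C_r(v_0,v_1)$ lies in exactly one of them (so $A\cup B=X\cup N(X)$). *)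

(* Defs.v *)
From mathcomp Require Import all_boot.
Set Implicit Arguments. Unset Strict Implicit. Unset Printing Implicit Defensive.

(* A graph is a finite simple graph: vertex type T : finType, adjacency e : rel T,
   assumed symmetric and irreflexive in the theorem. *)

Section LocalSep.
Variables (T : finType) (e : rel T).

(* p is the tail of a closed walk v = x0, x1, ..., xk = v of length k = size p <= r *)
Definition closed_walk (r : nat) (v : T) (p : seq T) : Prop :=
  path e v p /\ last v p = v /\ size p <= r.

Definition ball_V (r : nat) (v : T) (x : T) : Prop :=
  exists p, closed_walk r v p /\ x \in v :: p.

Definition ball_E (r : nat) (v : T) (x y : T) : Prop :=
  exists p, closed_walk r v p /\ exists i, i < size p /\
    ((nth v (v :: p) i = x /\ nth v p i = y) \/
     (nth v (v :: p) i = y /\ nth v p i = x)).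

Definition sub_conn (V : T -> Prop) (E : T -> T -> Prop) (x y : T) : Prop :=
  V x /\ exists p : seq T, last x p = y /\ (forall z, z \in p -> V z) /\
    forall i, i < size p -> E (nth x (x :: p) i) (nth x p i).

Definition disconnected (V : T -> Prop) (E : T -> T -> Prop) : Prop :=
  exists x y, V x /\ V y /\ ~ sub_conn V E x y.

Definition delV (V : T -> Prop) (S : {set T}) : T -> Prop :=
  fun x => V x /\ x \notin S.
Definition delE (E : T -> T -> Prop) (S : {set T}) : T -> T -> Prop :=
  fun x y => E x y /\ x \notin S /\ y \notin S.

Definition local_cutvertex (r : nat) (v : T) : Prop :=
  disconnected (delV (ball_V r v) [set v]) (delE (ball_E r v) [set v]).

Definition nbhd (X : {set T}) : {set T} :=
  [set x | (x \notin X) && [exists u in X, e u x]].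

(* adjacency in the connectivity graph C_r(v0,v1) *)
Definition conn_adj (r : nat) (v0 v1 : T) (a b : T) : Prop :=
  sub_conn (delV (ball_V r v0) [set v0; v1]) (delE (ball_E r v0) [set v0; v1]) a b \/
  sub_conn (delV (ball_V r v1) [set v0; v1]) (delE (ball_E r v1) [set v0; v1]) a b.

Definition connectivity_V (v0 v1 : T) : T -> Prop :=
  fun x => x \in nbhd [set v0; v1].

Definition dist_le_half (r : nat) (v0 v1 : T) : Prop :=
  exists p, path e v0 p /\ last v0 p = v1 /\ 2 * size p <= r.

Definition local_2_separator (r : nat) (v0 v1 : T) : Prop :=
  v0 != v1 /\
  disconnected (connectivity_V v0 v1) (conn_adj r v0 v1) /\
  dist_le_half r v0 v1.

Definition local_2_separation (r : nat) (A B : {set T}) (v0 v1 : T) : Prop :=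
  let X := [set v0; v1] in
  A :&: B = X /\ local_2_separator r v0 v1 /\
  A :\: X != set0 /\ B :\: X != set0 /\
  (A :\: X) :|: (B :\: X) = nbhd X /\ [disjoint A :\: X & B :\: X] /\
  (forall x y, sub_conn (connectivity_V v0 v1) (conn_adj r v0 v1) x y ->
     (x \in A) = (y \in A)).

End LocalSep.

(* Main.v *)
Require Import Defs.
From mathcomp Require Import all_boot.
From Stdlib Require Import Classical.

Section H.
Variables (T : finType) (e : rel T).

Lemma sub_conn_refl (V : T -> Prop) (E : T -> T -> Prop) y :
  V y -> sub_conn V E y y.
Proof. by move=> Vy; split=> //; exists [::]; split=> //; split. Qed.

Lemma sub_conn_cons (V : T -> Prop) (E : T -> T -> Prop) x z y :
  V x -> E x z -> sub_conn V E z y -> sub_conn V E x y.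
Proof.
move=> Vx Exz [Vz [p [hl [hV hE]]]]; split=> //; exists (z :: p); split=> //; split.
  by move=> w; rewrite inE => /orP[/eqP->|]; auto.
case=> [|i] /= hi; first exact: Exz.
have hi' : i < size p by [].
have := hE i hi'.
by rewrite [nth x (z :: p) i](set_nth_default z) 1?[nth x p i](set_nth_default z) //; apply: leqW.
Qed.

Lemma edge_conn r v p i u w (S : {set T}) :
  closed_walk e r v p -> i < size p -> u \notin S -> w \notin S ->
  u = nth v (v :: p) i -> w = nth v p i ->
  sub_conn (delV (ball_V e r v) S) (delE (ball_E e r v) S) u w /\
  sub_conn (delV (ball_V e r v) S) (delE (ball_E e r v) S) w u.
Proof.
move=> cw hi uS wS hu hw.
have bu : ball_V e r v u.
  exists p; split=> //; rewrite hu; apply: mem_nth; exact: leqW.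
have bw : ball_V e r v w.
  exists p; split=> //; rewrite hw in_cons; apply/orP; right; exact: mem_nth.
split; apply: sub_conn_cons; try (apply: sub_conn_refl); try done;
  (split; [|split=> //]); exists p; split=> //; exists i; split=> //; by [left|right].
Qed.

Lemma sep_contra r A B v0 v1 x y :
  local_2_separation e r A B v0 v1 ->
  x \in nbhd e [set v0; v1] -> y \in nbhd e [set v0; v1] -> x \notin A -> y \in A ->
  sub_conn (delV (ball_V e r v1) [set v0; v1]) (delE (ball_E e r v1) [set v0; v1]) x y ->
  False.
Proof.
move=> [_ [_ [_ [_ [_ [_ Hc]]]]]] hx hy xA yA hs.
suff : (x \in A) = (y \in A) by rewrite yA (negbTE xA).
apply: Hc; apply: (@sub_conn_cons _ _ x y) => //; last exact: sub_conn_refl.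
  by right.
Qed.

Lemma reach r v a a' : a != a' -> forall p x, x != a -> x != a' -> x != v -> ball_V e r v x ->
  last x p = a ->
  (forall z, z \in p -> delV (ball_V e r v) [set v] z) ->
  (forall i, i < size p -> delE (ball_E e r v) [set v] (nth x (x :: p) i) (nth x p i)) ->
  sub_conn (delV (ball_V e r v) [set a'; v]) (delE (ball_E e r v) [set a'; v]) x a \/
  sub_conn (delV (ball_V e r v) [set a; v]) (delE (ball_E e r v) [set a; v]) x a'.
Proof.
move=> haa'.
elim=> [|z p IH] x hxa hxa' hxv hbx hl hV hE.
  by move: hl => /= /eqP; rewrite (negbTE hxa).
have [bxz [_ zv]] := hE 0 erefl.
have [bz _] := hV z (mem_head _ _).
rewrite /= in bxz zv; rewrite !inE in zv.
have Vx1 : delV (ball_V e r v) [set a'; v] x by split=> //; rewrite !inE negb_or hxa' hxv.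
have Vx2 : delV (ball_V e r v) [set a; v] x by split=> //; rewrite !inE negb_or hxa hxv.
case: (eqVneq z a) => [eza|nza].
  subst z; left; apply: (@sub_conn_cons _ _ x a) => //.
    by split=> //; rewrite !inE !negb_or hxa' hxv haa' zv.
  by apply: sub_conn_refl; split=> //; rewrite !inE negb_or zv haa'.
case: (eqVneq z a') => [eza|nza'].
  subst z; right; apply: (@sub_conn_cons _ _ x a') => //.
    by split=> //; rewrite !inE !negb_or hxa hxv eq_sym haa' zv.
  by apply: sub_conn_refl; split=> //; rewrite !inE negb_or zv eq_sym haa'.
have Hz : forall i, i < size p -> delE (ball_E e r v) [set v] (nth z (z :: p) i) (nth z p i).
  move=> i hi; have := hE i.+1 hi => /=.
  by rewrite [nth x (z :: p) i](set_nth_default z) 1?[nth x p i](set_nth_default z) //; apply: leqW.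
have := IH z nza nza' zv bz hl (fun w hw => hV w (mem_behead (s:=z::p) hw)) Hz.
case=> h; [left|right]; apply: (@sub_conn_cons _ _ x z) => //; split=> //; rewrite !inE !negb_or ?hxa ?hxa' hxv zv ?nza ?nza' //.
Qed.
End H.

Theorem lemma5p11 (T : finType) (e : rel T) (e_sym : symmetric e)
  (e_irr : irreflexive e) (r : nat) (hr : 4 <= r)
  (A B A' B' : {set T}) (a a' v : T) :
  local_2_separation e r A B a' v -> e a' v ->
  local_2_separation e r A' B' a v -> e a v ->
  a != a' -> a \in A -> a' \in A' ->
  ~ local_cutvertex e r v ->
  B :&: B' = [set v].
Proof.
move=> S1 ea'v S2 eav naa' aA a'A' nc.
have S1' := S1; have S2' := S2.
move: S1 => /= [HAB [_ [_ [_ [HU [Hdis _]]]]]].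
move: S2 => /= [HAB' [_ [_ [_ [HU' [Hdis' _]]]]]].
have av : a != v by apply/eqP => h; rewrite h e_irr in eav.
have a'v : a' != v by apply/eqP => h; rewrite h e_irr in ea'v.
have vB : v \in B.
  have : v \in A :&: B by rewrite HAB !inE eqxx orbT.
  by rewrite inE => /andP[].
have vB' : v \in B'.
  have : v \in A' :&: B' by rewrite HAB' !inE eqxx orbT.
  by rewrite inE => /andP[].
apply/setP => y; rewrite !inE; have [->|yv] := eqVneq y v; first by rewrite vB vB'.
apply/negbTE/negP => /andP[yB yB'].
have ya' : y != a'.
  apply/eqP => h; have : a' \in A' :&: B' by rewrite inE a'A' -h yB'.
  rewrite HAB' !inE => /orP[]/eqP h'.
    by rewrite h' eqxx in naa'.
  by rewrite h' eqxx in a'v.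
have ya : y != a.
  apply/eqP => h; have : a \in A :&: B by rewrite inE aA -h yB.
  rewrite HAB !inE => /orP[]/eqP h'.
    by rewrite h' eqxx in naa'.
  by rewrite h' eqxx in av.
have yA : y \notin A.
  apply/negP => yA; have : y \in A :&: B by rewrite inE yA yB.
  by rewrite HAB !inE (negbTE ya') (negbTE yv).
have yA' : y \notin A'.
  apply/negP => yA'; have : y \in A' :&: B' by rewrite inE yA' yB'.
  by rewrite HAB' !inE (negbTE ya) (negbTE yv).
have ynb : y \in nbhd e [set a'; v].
  by rewrite -HU inE; apply/orP; right; rewrite !inE negb_or ya' yv yB.
have ynb' : y \in nbhd e [set a; v].
  by rewrite -HU' inE; apply/orP; right; rewrite !inE negb_or ya yv yB'.
have anb : a \in nbhd e [set a'; v].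
  rewrite /nbhd inE !inE negb_or naa' av /=; apply/existsP; exists v.
  by rewrite !inE eqxx orbT /= e_sym.
have a'nb' : a' \in nbhd e [set a; v].
  rewrite /nbhd inE !inE negb_or eq_sym naa' a'v /=; apply/existsP; exists v.
  by rewrite !inE eqxx orbT /= e_sym.
case: (boolP (e v y)) => evy.
  have bw : forall z, e v z -> ball_V e r v z.
    move=> z evz; exists [:: z; v]; split; last by rewrite !inE eqxx orbT.
    split; first by rewrite /= evz e_sym evz.
    by split=> //; apply: leq_trans hr.
  have H : sub_conn (delV (ball_V e r v) [set v]) (delE (ball_E e r v) [set v]) y a.
    apply: NNPP => H; apply: nc; exists y, a; split; last split => //.
      by split; [apply: bw | rewrite in_set1].
    by split; [apply: bw; rewrite e_sym | rewrite in_set1].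
  case: H => Vy [p [hl [hV hE]]].
  case: (@reach T e r v a a' naa' p y ya ya' yv Vy.1 hl hV hE) => h.
    exact: (@sep_contra T e r A B a' v y a S1' ynb anb yA aA h).
  exact: (@sep_contra T e r A' B' a v y a' S2' ynb' a'nb' yA' a'A' h).
have ea'y : e a' y.
  move: ynb; rewrite /nbhd inE => /andP[_ /existsP[u /andP[]]].
  by rewrite !inE => /orP[]/eqP-> //; rewrite (negbTE evy).
have eay : e a y.
  move: ynb'; rewrite /nbhd inE => /andP[_ /existsP[u /andP[]]].
  by rewrite !inE => /orP[]/eqP-> //; rewrite (negbTE evy).
have cw : closed_walk e r v [:: a; y; a'; v].
  split; first by rewrite /= e_sym eav eay e_sym ea'y ea'v.
  by split.
have anS : a \notin [set a'; v] by rewrite !inE negb_or naa' av.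
have ynS : y \notin [set a'; v] by rewrite !inE negb_or ya' yv.
have [_ h] := @edge_conn T e r v [:: a; y; a'; v] 1 a y [set a'; v] cw erefl anS ynS erefl erefl.
exact: (@sep_contra T e r A B a' v y a S1' ynb anb yA aA h).
Qed.
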